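(* Let $0<\gamma<1$ and let $\Pi$ be a deterministic communication protocol on $\{0,1\}^n\times\{0,1\}^n$ of depth $d$. Then there exists a $\gamma$-subcube-like protocol $\tilde\Pi$ (whose protocol tree need not be binary and may be undefined on some inputs) of depth at most $d$ and codimension $\mathrm{codim}(\tilde\Pi)\le \frac{7}{1-\gamma}\, d$ such that \[ \Pr_{(\bm x,\bm y)\sim\{0,1\}^n\times\{0,1\}^n}\big[\Pi(\bm x,\bm y)\ne\tilde\Pi(\bm x,\bm y)\big]\le e^{-d}, \] where inputs on which $\tilde\Pi$ is undefined count as disagreements.
   Context: A (generalized) protocol is a rooted tree in which each node $v$ is associated with a rectangle $R_v=X_v\times Y_v\subseteq\{0,1\}^n\times\{0,1\}^n$, the root with a subset of the full input space, and at each internal node one player partitions her/his side: the children's rectangles are of the form $X'\times Y_v$ (Alice speaks) or $X_v\times Y'$ (Bob speaks) and are disjoint; leaves are labelled with outputs, and $\tilde\Pi(x,y)$ is the label of the leaf containing $(x,y)$. Min-entropy: $\mathbf H_\infty(\bm x)=\min_x\log(1/\Pr[\bm x=x])$. A random $\bm x\in\{0,1\}^n$ is $\gamma$-spread if $\mathbf H_\infty(\bm x_I)\ge\gamma|I|$ for every $I\subseteq[n]$. It is $(I,\gamma)$-structured if $\bm x_I$ is constant (fixed to some $a_I$) with probability 1 and $\bm x_{[n]\setminus I}$ is $\gamma$-spread. A rectangle $X\times Y$ is $\gamma$-subcube-like w.r.t. $(I,J)$ if $\bm x\sim X$ (uniform) is $(I,\gamma)$-structured and $\bm y\sim Y$ is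 $(J,\gamma)$-structured; write $\mathrm{fix}(X)=I$, $\mathrm{fix}(Y)=J$ and $\mathrm{codim}(X\times Y)=|I|+|J|$. A protocol is $\gamma$-subcube-like if every node rectangle is $\gamma$-subcube-like; its codimension is the maximum codimension of its node rectangles. *)

(* Defs.v *)
From HB Require Import structures.
From mathcomp Require Import all_boot all_order all_algebra.
From mathcomp Require Import reals sequences exp.
Set Implicit Arguments. Unset Strict Implicit. Unset Printing Implicit Defensive.
Import Order.TTheory GRing.Theory Num.Theory.
Local Open Scope ring_scope.

Definition bits (n : nat) := {ffun 'I_n -> bool}.

Inductive dproto (n : nat) (O : Type) : Type :=
| DLeaf  of O
| DAlice of (bits n -> bool) & dproto n O & dproto n O  (* Alice sends f(x): false -> 1st, true -> 2nd *)
| DBob   of (bits n -> bool) & dproto n O & dproto n O. (* Bob sends g(y) *)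

Fixpoint ddepth n O (p : dproto n O) : nat :=
  match p with
  | DLeaf _ => 0
  | DAlice _ p0 p1 | DBob _ p0 p1 => (maxn (ddepth p0) (ddepth p1)).+1
  end.

Fixpoint deval n O (p : dproto n O) (x y : bits n) : O :=
  match p with
  | DLeaf o => o
  | DAlice f p0 p1 => if f x then deval p1 x y else deval p0 x y
  | DBob g p0 p1 => if g y then deval p1 x y else deval p0 x y
  end.

(* Every node carries its rectangle X_v x Y_v; internal nodes record who speaks
   (true = Alice) and have an arbitrary (finite, nonempty) list of children. *)
Inductive gproto (n : nat) (O : Type) : Type :=
| GLeaf of {set bits n} & {set bits n} & O
| GNode of {set bits n} & {set bits n} & bool & seq (gproto n O).

Definition rX n O (p : gproto n O) : {set bits n} :=
  match p with GLeaf X _ _ | GNode X _ _ _ => X end.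
Definition rY n O (p : gproto n O) : {set bits n} :=
  match p with GLeaf _ Y _ | GNode _ Y _ _ => Y end.

Fixpoint gwf n O (p : gproto n O) : Prop :=
  match p with
  | GLeaf _ _ _ => True
  | GNode X Y a cs =>
      cs <> [::] /\
      pairwise (fun c1 c2 : gproto n O =>
                  if a then [disjoint rX c1 & rX c2] else [disjoint rY c1 & rY c2]) cs /\
      (fix aux (l : seq (gproto n O)) : Prop :=
         match l with
         | [::] => True
         | c :: l' =>
             (if a then rY c = Y /\ rX c \subset X else rX c = X /\ rY c \subset Y)
             /\ gwf c /\ aux l'
         end) cs
  end.

Fixpoint gdepth n O (p : gproto n O) : nat :=
  match p with
  | GLeaf _ _ _ => 0
  | GNode _ _ _ cs =>
      ((fix aux (l : seq (gproto n O)) : nat :=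
          match l with [::] => 0 | c :: l' => maxn (gdepth c) (aux l') end) cs).+1
  end.

Fixpoint gall n O (P : {set bits n} -> {set bits n} -> Prop) (p : gproto n O) : Prop :=
  match p with
  | GLeaf X Y _ => P X Y
  | GNode X Y _ cs =>
      P X Y /\
      (fix aux (l : seq (gproto n O)) : Prop :=
         match l with [::] => True | c :: l' => gall P c /\ aux l' end) cs
  end.

Fixpoint gmax n O (f : {set bits n} -> {set bits n} -> nat) (p : gproto n O) : nat :=
  match p with
  | GLeaf X Y _ => f X Y
  | GNode X Y _ cs =>
      maxn (f X Y)
        ((fix aux (l : seq (gproto n O)) : nat :=
            match l with [::] => 0 | c :: l' => maxn (gmax f c) (aux l') end) cs)
  end.

Fixpoint geval n O (p : gproto n O) (x y : bits n) : option O :=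
  if (x \in rX p) && (y \in rY p) then
    match p with
    | GLeaf _ _ o => Some o
    | GNode _ _ _ cs =>
        (fix aux (l : seq (gproto n O)) : option O :=
           match l with
           | [::] => None
           | c :: l' => if geval c x y is Some o then Some o else aux l'
           end) cs
    end
  else None.

Section Entropy.
Variables (R : realType) (n : nat).

Definition prob_restr (X : {set bits n}) (S : {set 'I_n}) (a : bits n) : R :=
  #|[set x in X | [forall i in S, x i == a i]]|%:R / #|X|%:R.

(* H_oo(x_S) >= c, for x uniform on X : min over the values v of x_S in the
   support of log2 (1 / Pr[x_S = v]) is >= c (every support value arises as a_S
   for some a in X). *)
Definition minent_ge (X : {set bits n}) (S : {set 'I_n}) (c : R) : Prop :=
  forall a, a \in X -> c <= ln ((prob_restr X S a)^-1) / ln 2.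

Definition spread_on (X : {set bits n}) (K : {set 'I_n}) (gamma : R) : Prop :=
  forall S : {set 'I_n}, S \subset K -> minent_ge X S (gamma * #|S|%:R).

Definition structured (X : {set bits n}) (I : {set 'I_n}) (gamma : R) : Prop :=
  X != set0 /\
  (exists a : bits n, forall x, x \in X -> forall i, i \in I -> x i = a i) /\
  spread_on X (~: I) gamma.

Definition subcube_like (X Y : {set bits n}) (gamma : R) : Prop :=
  exists I J : {set 'I_n}, structured X I gamma /\ structured Y J gamma.

End Entropy.

(* fix(X): the coordinates that are constant on X (for gamma > 0 and X
   (I,gamma)-structured this is exactly I). *)
Definition fixset n (X : {set bits n}) : {set 'I_n} :=
  [set i | [forall x in X, forall x' in X, x i == x' i]].

Definition codim n (X Y : {set bits n}) : nat := #|fixset X| + #|fixset Y|.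

Definition gsubcube_like (R : realType) n O (gamma : R) (p : gproto n O) : Prop :=
  gall (fun X Y => subcube_like X Y gamma) p.

Definition gcodim n O (p : gproto n O) : nat := gmax (@codim n) p.

Definition disagree_prob (R : realType) n (O : eqType) (P : dproto n O) (Q : gproto n O) : R :=
  #|[set xy : bits n * bits n | geval Q xy.1 xy.2 != Some (deval P xy.1 xy.2)]|%:R
  / #|[set: bits n * bits n]|%:R.

(* Main.v *)
Require Import Defs.
From HB Require Import structures.
From mathcomp Require Import all_boot all_order all_algebra.
From mathcomp Require Import reals sequences exp.
From mathcomp Require Import ring lra.
Import Order.TTheory GRing.Theory Num.Theory.
Local Open Scope ring_scope.
Set Implicit Arguments. Unset Strict Implicit. Unset Printing Implicit Defensive.

Fixpoint allp (T : Type) (P : T -> Prop) (l : seq T) : Prop :=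
  match l with [::] => True | x :: l' => P x /\ allp P l' end.

Lemma allp_cat T (P : T -> Prop) l1 l2 : allp P l1 -> allp P l2 -> allp P (l1 ++ l2).
Proof. by elim: l1 => //= x l IH [H1 H2] H3; split => //; apply: IH. Qed.

Lemma allp_impl T (P Q : T -> Prop) l : (forall x, P x -> Q x) -> allp P l -> allp Q l.
Proof. by move=> PQ; elim: l => //= x l IH [H1 H2]; split; [apply: PQ|apply: IH]. Qed.

Fixpoint evl n (O : Type) (cs : seq (gproto n O)) (x y : bits n) : option O :=
  match cs with
  | [::] => None
  | c :: l => if geval c x y is Some o then Some o else evl l x y
  end.

Lemma geval_node n O X Y a (cs : seq (gproto n O)) x y :
  geval (GNode X Y a cs) x y = if (x \in X) && (y \in Y) then evl cs x y else None.
Proof. rewrite /=; case: ifP => // _; by elim: cs => //= c l ->. Qed.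

Lemma geval_out n O (p : gproto n O) x y :
  ~~ ((x \in rX p) && (y \in rY p)) -> geval p x y = None.
Proof. by case: p => [X Y o|X Y a cs] /= /negbTE ->. Qed.

Lemma evl_cat n O (l1 l2 : seq (gproto n O)) x y :
  evl (l1 ++ l2) x y = if evl l1 x y is Some o then Some o else evl l2 x y.
Proof. by elim: l1 => //= c l IH; case: (geval c x y). Qed.

Lemma evl_noneX n O (cs : seq (gproto n O)) (A : {set bits n}) x y :
  allp (fun c => rX c \subset A) cs -> x \notin A -> evl cs x y = None.
Proof.
move=> F xA; elim: cs F => //= c l IH [cA /IH ->]; rewrite geval_out //.
by apply/negP => /andP[xc _]; move/negP: xA; apply; apply: (subsetP cA).
Qed.

Lemma evl_noneY n O (cs : seq (gproto n O)) (A : {set bits n}) x y :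
  allp (fun c => rY c \subset A) cs -> y \notin A -> evl cs x y = None.
Proof.
move=> F yA; elim: cs F => //= c l IH [cA /IH ->]; rewrite geval_out //.
by apply/negP => /andP[_ yc]; move/negP: yA; apply; apply: (subsetP cA).
Qed.

Lemma gwf_nodeA n O (X Y : {set bits n}) (cs : seq (gproto n O)) :
  cs <> [::] -> pairwise (fun c1 c2 => [disjoint rX c1 & rX c2]) cs ->
  allp (fun c => (rY c = Y /\ rX c \subset X) /\ gwf c) cs ->
  gwf (GNode X Y true cs).
Proof.
move=> ne pw F; split; first exact: ne. split; first exact: pw.
elim: cs {ne pw} F => //= c l IH [[H1 H2] H3].
by split; [|split; [|apply: IH]].
Qed.

Lemma gwf_nodeB n O (X Y : {set bits n}) (cs : seq (gproto n O)) :
  cs <> [::] -> pairwise (fun c1 c2 => [disjoint rY c1 & rY c2]) cs ->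
  allp (fun c => (rX c = X /\ rY c \subset Y) /\ gwf c) cs ->
  gwf (GNode X Y false cs).
Proof.
move=> ne pw F; split; first exact: ne. split; first exact: pw.
elim: cs {ne pw} F => //= c l IH [[H1 H2] H3].
by split; [|split; [|apply: IH]].
Qed.

Lemma gall_node n O (P : {set bits n} -> {set bits n} -> Prop) (X Y : {set bits n}) a (cs : seq (gproto n O)) :
  P X Y -> allp (gall P) cs -> gall P (GNode X Y a cs).
Proof. by move=> PXY F; split=> //; elim: cs F => //= c l IH [H1 /IH]. Qed.

Lemma gdepth_node n O (X Y : {set bits n}) a (cs : seq (gproto n O)) k :
  allp (fun c => gdepth c <= k)%N cs -> (gdepth (GNode X Y a cs) <= k.+1)%N.
Proof. by move=> F; rewrite /= ltnS; elim: cs F => //= c l IH [H1 /IH]; rewrite geq_max H1. Qed.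

Lemma maxn_ind (P : nat -> Prop) a b : P a -> P b -> P (maxn a b).
Proof. by move=> Pa Pb; rewrite /maxn; case: ifP. Qed.

Lemma gmax_node n O (f : {set bits n} -> {set bits n} -> nat) (Pm : nat -> Prop) (X Y : {set bits n}) a
   (cs : seq (gproto n O)) :
  Pm 0%N -> Pm (f X Y) -> allp (fun c => Pm (gmax f c)) cs -> Pm (gmax f (GNode X Y a cs)).
Proof.
move=> P0 Pf F; rewrite /=; apply: maxn_ind => //.
by elim: cs F => //= c l IH [H1 /IH]; apply: maxn_ind.
Qed.

Definition badp n (O : eqType) (Q : gproto n O) (v : bits n -> bits n -> O) (A B : {set bits n}) :=
  [set xy : bits n * bits n | [&& xy.1 \in A, xy.2 \in B & geval Q xy.1 xy.2 != Some (v xy.1 xy.2)]].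
Definition badl n (O : eqType) (cs : seq (gproto n O)) (v : bits n -> bits n -> O) (A B : {set bits n}) :=
  [set xy : bits n * bits n | [&& xy.1 \in A, xy.2 \in B & evl cs xy.1 xy.2 != Some (v xy.1 xy.2)]].

Lemma card_bad_le n (O : eqType) (P : pred (bits n * bits n)) (A B : {set bits n}) :
  (#|[set xy : bits n * bits n | [&& xy.1 \in A, xy.2 \in B & P xy]]| <= #|A| * #|B|)%N.
Proof.
rewrite -cardsX; apply: subset_leq_card; apply/subsetP => -[x y]; rewrite !inE /=.
by case/and3P => -> ->.
Qed.

Lemma badl_consA n (O : eqType) (c : gproto n O) cs v (T Y : {set bits n}) :
  rY c = Y ->
  badl (c :: cs) v T Y \subset badp c v (rX c) Y :|: badl cs v (T :\: rX c) Y.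
Proof.
move=> cY; apply/subsetP => -[x y]; rewrite !inE /= => /and3P[xT yY].
case xc: (x \in rX c).
  rewrite yY /=; case: (geval c x y) => [o|] //= H; by rewrite H.
rewrite geval_out ?xc //= => H; by rewrite xT yY H ?orbT.
Qed.

Lemma badl_consB n (O : eqType) (c : gproto n O) cs v (X T : {set bits n}) :
  rX c = X ->
  badl (c :: cs) v X T \subset badp c v X (rY c) :|: badl cs v X (T :\: rY c).
Proof.
move=> cX; apply/subsetP => -[x y]; rewrite !inE /= => /and3P[xX yT].
case yc: (y \in rY c).
  rewrite xX /=; case: (geval c x y) => [o|] //= H; by rewrite H.
rewrite geval_out ?yc ?andbF //= => H; by rewrite xX yT H ?orbT ?andbT.
Qed.

Lemma allrel_disj n O (r : gproto n O -> {set bits n}) (A B : {set bits n}) l1 l2 :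
  allp (fun c => r c \subset A) l1 -> allp (fun c => r c \subset B) l2 -> [disjoint A & B] ->
  allrel (fun c1 c2 => [disjoint r c1 & r c2]) l1 l2.
Proof.
move=> F1 F2 AB; rewrite /allrel; elim: l1 F1 => //= c l IH [cA /IH ->]; rewrite andbT.
elim: l2 F2 {IH} => //= c' l' IH' [c'B /IH' ->]; rewrite andbT.
exact: disjointWl cA (disjointWr c'B AB).
Qed.

Lemma all_disj n O (r : gproto n O -> {set bits n}) (P0 A : {set bits n}) l :
  allp (fun c => r c \subset A) l -> [disjoint P0 & A] -> all (fun c => [disjoint P0 & r c]) l.
Proof.
move=> F PA; elim: l F => //= c l IH [cA /IH ->]; rewrite andbT.
exact: disjointWr cA PA.
Qed.

Lemma card_setU_le (T : finType) (A B : {set T}) : (#|A :|: B| <= #|A| + #|B|)%N.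
Proof. by rewrite cardsU leq_subr. Qed.

Lemma card_badl n (O : eqType) (cs : seq (gproto n O)) v A B : (#|badl cs v A B| <= #|A| * #|B|)%N.
Proof. exact: card_bad_le. Qed.
Lemma card_badp n (O : eqType) (Q : gproto n O) v A B : (#|badp Q v A B| <= #|A| * #|B|)%N.
Proof. exact: card_bad_le. Qed.

Lemma arith1 (R : realType) (A bP bc t p y : R) : 0 <= A -> 0 < p -> p <= t -> 0 <= y ->
  0 <= bP -> 0 <= bc -> bP * t <= bc * p ->
  A * Num.sqrt bP * Num.sqrt (p * y) + 2 * (A * Num.sqrt bc * Num.sqrt ((t - p) * y))
   <= 2 * (A * Num.sqrt bc * Num.sqrt (t * y)).
Proof.
move=> A0 p0 pt y0 bP0 bc0 key.
have t0 : 0 < t by apply: lt_le_trans pt.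
have tp0 : 0 <= t - p by rewrite subr_ge0.
rewrite !sqrtrM ?(ltW p0) ?(ltW t0) //.
have key2 : Num.sqrt bP * Num.sqrt t <= Num.sqrt bc * Num.sqrt p.
  by rewrite -!sqrtrM // ler_sqrt // ?mulr_ge0 // ltW.
have st0 : 0 < Num.sqrt t by rewrite sqrtr_gt0.
have sp0 : 0 <= Num.sqrt p := sqrtr_ge0 p.
have sr0 : 0 <= Num.sqrt (t - p) := sqrtr_ge0 _.
have sb0 : 0 <= Num.sqrt bc := sqrtr_ge0 _.
have sb1 : 0 <= Num.sqrt bP := sqrtr_ge0 _.
have sy0 : 0 <= Num.sqrt y := sqrtr_ge0 _.
have E1 : Num.sqrt p ^+ 2 = p by rewrite sqr_sqrtr // ltW.
have E2 : Num.sqrt t ^+ 2 = t by rewrite sqr_sqrtr // ltW.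
have E3 : Num.sqrt (t - p) ^+ 2 = t - p by rewrite sqr_sqrtr.
set sp := Num.sqrt p in sp0 key2 E1 *; set st := Num.sqrt t in st0 key2 E2 *.
set sr := Num.sqrt (t - p) in sr0 E3 *; set b2 := Num.sqrt bc in sb0 key2 *.
set b1 := Num.sqrt bP in sb1 key2 *; set sy := Num.sqrt y in sy0 *.
suff main : b1 * sp + 2 * b2 * sr <= 2 * b2 * st.
  have := ler_wpM2r (mulr_ge0 A0 sy0) main; nra.
rewrite -(ler_pM2r st0).
have h1 := ler_wpM2r sp0 key2.
have h2 : 0 <= b2 * (st - sr) ^+ 2 by rewrite mulr_ge0 // sqr_ge0.
have h3 : b2 * sp ^+ 2 = b2 * (st ^+ 2 - sr ^+ 2) by rewrite E1 E2 E3; ring.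
nra.
Qed.

Lemma arith_sq2 (R : realType) (a b : R) : 0 <= a -> 0 <= b ->
  2 * Num.sqrt a + 2 * Num.sqrt b <= Num.sqrt 8 * Num.sqrt (a + b).
Proof.
move=> a0 b0.
have sa := sqrtr_ge0 a; have sb := sqrtr_ge0 b.
rewrite -sqrtrM ?ler0n //.
have -> : 2 * Num.sqrt a + 2 * Num.sqrt b = Num.sqrt ((2 * Num.sqrt a + 2 * Num.sqrt b) ^+ 2).
  by rewrite sqrtr_sqr ger0_norm //; nra.
rewrite ler_sqrt; last by rewrite mulr_ge0 ?ler0n // addr_ge0.
have E1 : Num.sqrt a ^+ 2 = a by rewrite sqr_sqrtr.
have E2 : Num.sqrt b ^+ 2 = b by rewrite sqr_sqrtr.
have h : 0 <= (Num.sqrt a - Num.sqrt b) ^+ 2 by rewrite sqr_ge0.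
nra.
Qed.

Lemma arith_node (R : realType) (A s x0 x1 y : R) : 0 <= A -> 0 <= s -> 0 <= x0 -> 0 <= x1 -> 0 <= y ->
  2 * (A * s * Num.sqrt (x0 * y)) + 2 * (A * s * Num.sqrt (x1 * y))
   <= A * Num.sqrt 8 * s * Num.sqrt ((x0 + x1) * y).
Proof.
move=> A0 s0 x00 x10 y0.
have := arith_sq2 (mulr_ge0 x00 y0) (mulr_ge0 x10 y0).
rewrite -mulrDl => H.
have As : 0 <= A * s by rewrite mulr_ge0.
have := ler_wpM2l As H; nra.
Qed.

Lemma arith_disc (R : realType) (Kk M bc N q : R) : 1 <= Kk -> 0 < M -> 0 <= bc -> 0 <= N -> 0 <= q ->
  ~~ (bc * N ^+ 2 <= M * q) ->
  q <= 2 * (Kk * (N / Num.sqrt M) * Num.sqrt bc * Num.sqrt q).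
Proof.
move=> K1 M0 bc0 N0 q0; rewrite -ltNge => H.
have sM : 0 < Num.sqrt M by rewrite sqrtr_gt0.
have h : Num.sqrt q * Num.sqrt M <= N * Num.sqrt bc.
  rewrite -sqrtrM // -[N]ger0_norm // -sqrtr_sqr -sqrtrM ?sqr_ge0 //.
  by rewrite ler_sqrt ?mulr_ge0 ?sqr_ge0 // mulrC [_ * bc]mulrC ltW.
have h2 : Num.sqrt q <= N / Num.sqrt M * Num.sqrt bc.
  by rewrite mulrAC ler_pdivlMr.
have E : Num.sqrt q ^+ 2 = q by rewrite sqr_sqrtr.
have u0 := sqrtr_ge0 q.
set u := Num.sqrt q in h2 E u0 *. set v := N / Num.sqrt M * Num.sqrt bc in h2 *.
rewrite -E.
have -> : Kk * (N / Num.sqrt M) * Num.sqrt bc * u = Kk * v * u by rewrite /v; ring.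
have h3 : u * u <= v * u by apply: ler_wpM2r.
have w0 : 0 <= v * u by apply: mulr_ge0 => //; apply: le_trans h2.
rewrite expr2 (le_trans h3) //.
rewrite -mulrA. set w := v * u in h3 w0 *. nra.
Qed.

Lemma card_restr n (S : {set 'I_n}) (a : bits n) :
  (#|[set x : bits n | [forall i in S, x i == a i]]| * 2 ^ #|S| = 2 ^ n)%N.
Proof.
pose F := fun i : 'I_n => if i \in S then pred1 (a i) else predT.
have -> : #|[set x : bits n | [forall i in S, x i == a i]]| = #|family F|.
  rewrite cardsE; apply: eq_card => x; rewrite !inE.
  apply/forall_inP/familyP => [H i|H i iS]; rewrite /F.
    by case: ifP => iS //; rewrite inE; apply: H.
  by have := H i; rewrite /F iS inE.
rewrite card_family foldrE big_map big_enum /=.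
rewrite (bigID (fun i => i \in S)) /=.
rewrite (eq_bigr (fun _ => 1%N)); last by move=> i iS; rewrite /F iS card1.
rewrite (eq_bigr (fun _ => 2%N) (P := fun i => i \notin S)); last first.
  by move=> i /negbTE iS; rewrite /F iS card_bool.
rewrite !prod_nat_const exp1n mul1n -expnD.
congr (_ ^ _)%N.
have := cardC (mem S); rewrite card_ord => E.
rewrite -[in RHS]E addnC; congr (_ + _)%N; apply: eq_card => i; rewrite !inE //.
Qed.

Definition restr n (T : {set bits n}) (S : {set 'I_n}) (a : bits n) :=
  [set x in T | [forall i in S, x i == a i]].

Lemma restr_sub n (T : {set bits n}) (S : {set 'I_n}) a : restr T S a \subset T.
Proof. by apply/subsetP => x; rewrite inE => /andP[]. Qed.

Lemma restr_self n (T : {set bits n}) (S : {set 'I_n}) a : a \in T -> a \in restr T S a.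
Proof. by move=> aT; rewrite inE aT; apply/forall_inP. Qed.

Lemma fixsetS n (P X : {set bits n}) : P \subset X -> Defs.fixset X \subset Defs.fixset P.
Proof.
move=> PX; apply/subsetP => i; rewrite !inE => /forall_inP H.
apply/forall_inP => x xP; apply/forall_inP => y yP.
by have /forall_inP := H x (subsetP PX x xP); apply; apply: (subsetP PX).
Qed.

Lemma fixset_restr n (T : {set bits n}) (S : {set 'I_n}) a : S \subset Defs.fixset (restr T S a).
Proof.
apply/subsetP => i iS; rewrite inE; apply/forall_inP => x; rewrite inE => /andP[_ /forall_inP Hx].
apply/forall_inP => y; rewrite inE => /andP[_ /forall_inP Hy].
by rewrite (eqP (Hx i iS)) (eqP (Hy i iS)).
Qed.

Lemma fixset_eq n (P : {set bits n}) x y i : x \in P -> y \in P -> i \in Defs.fixset P -> x i = y i.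
Proof.
by move=> xP yP; rewrite inE => /forall_inP /(_ x xP) /forall_inP /(_ y yP) /eqP.
Qed.

Lemma card_fixset n (X : {set bits n}) : (#|X| * 2 ^ #|Defs.fixset X| <= 2 ^ n)%N.
Proof.
have [->|[a aX]] := set_0Vmem X; first by rewrite cards0.
rewrite -(card_restr (Defs.fixset X) a) leq_mul2r; apply/orP; right.
apply: subset_leq_card; apply/subsetP => x xX; rewrite inE.
by apply/forall_inP => i iF; rewrite (fixset_eq xX aX iF).
Qed.

Section Main.
Variable R : realType.
Variable gamma : R.
Hypothesis hg : 0 < gamma < 1.
Variable n : nat.

Definition beta : R := expR (- (gamma * ln 2)).

Lemma ln2pos : 0 < ln (2 : R).
Proof. by apply: ln_gt0; rewrite ltr1n. Qed.

Lemma beta_gt0 : 0 < beta. Proof. exact: expR_gt0. Qed.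
Lemma beta_ge0 : 0 <= beta. Proof. exact: ltW beta_gt0. Qed.
Lemma beta_le1 : beta <= 1.
Proof.
rewrite /beta -[X in _ <= X]expR0 ler_expR oppr_le0; case/andP: hg => g0 _.
by apply: mulr_ge0; apply: ltW => //; exact: ln2pos.
Qed.

Lemma beta_ge_half : 2^-1 <= beta.
Proof.
have -> : (2^-1 : R) = expR (- ln 2) by rewrite expRN lnK // posrE.
rewrite /beta ler_expR lerN2; case/andP: hg => _ g1.
by rewrite ger_pMl ?ln2pos // ltW.
Qed.

Lemma minent_of (p : R) k : 0 < p -> p <= beta ^+ k -> gamma * k%:R <= ln (p^-1) / ln 2.
Proof.
move=> p0 pk; rewrite ler_pdivlMr ?ln2pos // lnV ?posrE //.
move: pk; rewrite /beta -expRM_natl => pk.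
have : ln p <= k%:R * - (gamma * ln 2).
  by rewrite -[X in _ <= X]expRK ler_ln ?posrE ?expR_gt0.
lra.
Qed.


Lemma cardsU_dis (T : finType) (A B : {set T}) : B \subset ~: A -> #|A :|: B| = (#|A| + #|B|)%N.
Proof.
move=> BA; rewrite cardsU.
suff -> : A :&: B = set0 by rewrite cards0 subn0.
apply/setP => i; rewrite !inE; case iA: (i \in A) => //=; apply/negP => iB.
by have := subsetP BA i iB; rewrite inE iA.
Qed.

Lemma step (X T : {set bits n}) : T \subset X -> T != set0 ->
  exists P : {set bits n}, [/\ P \subset T, P != set0, structured P (Defs.fixset P) gamma &
   beta ^+ #|Defs.fixset P| * #|T|%:R <= beta ^+ #|Defs.fixset X| * #|P|%:R].
Proof.
move=> TX /set0Pn [t0 t0T].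
pose cond := fun p : {set 'I_n} * bits n =>
  [&& p.1 \subset ~: Defs.fixset X, p.2 \in T & beta ^+ #|p.1| * #|T|%:R <= #|restr T p.1 p.2|%:R].
have c0 : cond (set0, t0).
  rewrite /cond /= sub0set t0T cards0 expr0 mul1r /=.
  have -> : restr T set0 t0 = T.
    apply/setP => x; rewrite inE; case xT: (x \in T) => //=.
    by apply/forall_inP => i; rewrite inE.
  by [].
case: (arg_maxnP (fun p : {set 'I_n} * bits n => #|p.1|) c0) => [[S a]] /= /and3P[SF aT Hc] maxS.
set P := restr T S a.
have aP : a \in P by apply: restr_self.
have PT : P \subset T := restr_sub T S a.
have FXP : Defs.fixset X \subset Defs.fixset P := fixsetS (subset_trans PT TX).
have SP : S \subset Defs.fixset P := fixset_restr T S a.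
have cardF : (#|Defs.fixset X| + #|S| <= #|Defs.fixset P|)%N.
  by rewrite -cardsU_dis // subset_leq_card // subUset FXP SP.
have P0 : (0 < #|P|)%N by apply/card_gt0P; exists a.
exists P; split => //.
- by apply/set0Pn; exists a.
- split; first by apply/set0Pn; exists a.
  split; first by exists a => x xP i iF; exact: fixset_eq xP aP iF.
  move=> S' S'F b bP; apply: minent_of.
    rewrite /prob_restr divr_gt0 // ltr0n // card_gt0; apply/set0Pn; exists b.
    exact: (restr_self S' bP).
  rewrite /prob_restr ler_pdivrMr ?ltr0n //.
  rewrite leNgt; apply/negP => Hlt.
  have c1 : cond (S :|: S', b).
    rewrite /cond /= subUset SF /= (subsetP PT b bP) /=.
    have -> : #|S :|: S'| = (#|S| + #|S'|)%N.
      by rewrite cardsU_dis // (subset_trans S'F) // setCS.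
    apply/andP; split; first by rewrite (subset_trans S'F) // setCS.
    have E : beta ^+ (#|S| + #|S'|) * #|T|%:R = beta ^+ #|S'| * (beta ^+ #|S| * #|T|%:R).
      by rewrite exprD; ring.
    rewrite E; apply: (@le_trans _ _ (beta ^+ #|S'| * #|P|%:R)).
      apply: ler_wpM2l; first exact: exprn_ge0 beta_ge0.
      exact: Hc.
    apply: le_trans (ltW Hlt) _.
    rewrite ler_nat; apply: subset_leq_card; apply/subsetP => x.
    rewrite !inE => /andP[/andP[xT /forall_inP xS] /forall_inP xS'].
    rewrite xT /=; apply/forall_inP => i; rewrite inE => /orP[iS|iS'].
      move: bP; rewrite inE => /andP[_ /forall_inP bS].
      by rewrite (eqP (xS i iS)) (eqP (bS i iS)).
    exact: xS'.
  have := maxS _ c1; rewrite /= cardsU_dis; last by rewrite (subset_trans S'F) // setCS.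
  rewrite -[X in (_ <= X)%N]addn0 leq_add2l leqn0 cards_eq0 => /eqP S'0.
  move: Hlt; rewrite S'0 cards0 expr0 mul1r.
  suff -> : [set x in P | [forall i in set0, x i == b i]] = P by rewrite ltxx.
  apply/setP => x; rewrite inE; case xP: (x \in P) => //=.
  by apply/forall_inP => i; rewrite inE.
- apply: le_trans (_ : beta ^+ (#|Defs.fixset X| + #|S|) * #|T|%:R <= _).
    apply: ler_wpM2r; first by rewrite ler0n.
    by apply: (ler_wiXn2l beta_ge0 beta_le1).  
  rewrite exprD -mulrA; apply: ler_wpM2l; first exact: exprn_ge0 beta_ge0.
  exact: Hc.
Qed.


Variable O : eqType.
Variable d : nat.

Definition M : R := 2 ^+ (7 * d).
Definition Nn : R := (2 ^ n)%:R.
Definition K : R := Num.sqrt 8.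
Definition CB : R := 7 / (1 - gamma) * d%:R.
Definition Bnd k c (a b : R) :=
  K ^+ k * (Nn / Num.sqrt M) * Num.sqrt (beta ^+ c) * Num.sqrt (a * b).
Definition Inv (X Y : {set bits n}) :=
  beta ^+ codim X Y * Nn ^+ 2 <= M * (#|X|%:R * #|Y|%:R).

Lemma M_gt0 : 0 < M. Proof. by rewrite /M exprn_gt0. Qed.
Lemma Nn_gt0 : 0 < Nn. Proof. by rewrite /Nn ltr0n expn_gt0. Qed.
Lemma K_ge1 : 1 <= K.
Proof. by rewrite /K -[X in X <= _]sqrtr1 ler_sqrt // ler1n. Qed.
Lemma K_ge0 : 0 <= K. Proof. exact: le_trans K_ge1. Qed.

Lemma Bnd_ge0 k c a b : 0 <= Bnd k c a b.
Proof.
have W0 : 0 <= Nn / Num.sqrt M by rewrite divr_ge0 ?sqrtr_ge0 // ltW // Nn_gt0.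
rewrite /Bnd; apply: mulr_ge0; last exact: sqrtr_ge0.
apply: mulr_ge0; last exact: sqrtr_ge0.
by apply: mulr_ge0 => //; apply: exprn_ge0; exact: K_ge0.
Qed.

Lemma CB_ge0 : 0 <= CB.
Proof.
case/andP: hg => _ g1.
by apply: mulr_ge0; rewrite ?ler0n // divr_ge0 ?ler0n // subr_ge0 ltW.
Qed.

Lemma codim_bound (X Y : {set bits n}) : Inv X Y -> (codim X Y)%:R <= CB.
Proof.
rewrite /Inv => hI.
set c := codim X Y in hI *.
have hN : ((#|X| * #|Y|) * 2 ^ c <= 2 ^ n * 2 ^ n)%N.
  rewrite /c /codim expnD mulnACA; apply: leq_mul; exact: card_fixset.
have hNr : (#|X|%:R * #|Y|%:R) * 2 ^+ c <= Nn ^+ 2 :> R.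
  by rewrite /Nn -natrM -natrX -natrM expr2 -natrM ler_nat.
have h2 : (beta * 2) ^+ c <= M.
  have N2 : 0 < Nn ^+ 2 by rewrite exprn_gt0 // Nn_gt0.
  rewrite -(ler_pM2r N2) exprMn.
  have : beta ^+ c * Nn ^+ 2 * 2 ^+ c <= M * (#|X|%:R * #|Y|%:R) * 2 ^+ c.
    by rewrite ler_wpM2r ?exprn_ge0.
  move=> H; apply: (le_trans _ (le_trans H _)); first by rewrite mulrAC.
  by rewrite -mulrA; apply: ler_wpM2l => //; exact: ltW M_gt0.
have e2 : (2 : R) = expR (ln 2) by rewrite lnK // posrE.
move: h2; rewrite /M /beta {2 3}e2 -expRD -!expRM_natl ler_expR => h3.
have l2 := ln2pos.
case/andP: hg => g0 g1.
rewrite /CB mulrAC ler_pdivlMr ?subr_gt0 //.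
rewrite natrM in h3.
have E : c%:R * (- (gamma * ln 2) + ln 2) = c%:R * (1 - gamma) * ln 2 by ring.
by rewrite E ler_pM2r in h3.
Qed.


Definition MainP k := forall (Pi : dproto n O), (ddepth Pi <= k)%N ->
  forall X Y : {set bits n}, subcube_like X Y gamma -> Inv X Y ->
  exists Q : gproto n O,
    [/\ rX Q = X /\ rY Q = Y, gwf Q, gsubcube_like gamma Q,
        (gdepth Q <= k)%N /\ (gcodim Q)%:R <= CB
      & #|badp Q (deval Pi) X Y|%:R <= Bnd k (codim X Y) #|X|%:R #|Y|%:R].

Lemma leaf_ok k (o : O) (X Y : {set bits n}) : subcube_like X Y gamma -> Inv X Y ->
  exists Q : gproto n O,
    [/\ rX Q = X /\ rY Q = Y, gwf Q, gsubcube_like gamma Q,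
        (gdepth Q <= k)%N /\ (gcodim Q)%:R <= CB
      & #|badp Q (deval (DLeaf n o)) X Y|%:R <= Bnd k (codim X Y) #|X|%:R #|Y|%:R].
Proof.
move=> sXY hI; exists (GLeaf X Y o); split => //.
  by split => //; exact: codim_bound.
have -> : badp (GLeaf X Y o) (deval (DLeaf n o)) X Y = set0.
  apply/setP => -[x y]; rewrite !inE /=.
  by case: (x \in X); case: (y \in Y); rewrite /= ?eqxx.
by rewrite cards0 Bnd_ge0.
Qed.

Definition ChildA (T Y : {set bits n}) k (c : gproto n O) :=
  [/\ rY c = Y, rX c \subset T, gwf c, gsubcube_like gamma c & (gdepth c <= k)%N /\ (gcodim c)%:R <= CB].
Definition ChildB (X T : {set bits n}) k (c : gproto n O) :=
  [/\ rX c = X, rY c \subset T, gwf c, gsubcube_like gamma c & (gdepth c <= k)%N /\ (gcodim c)%:R <= CB].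

Lemma inv_child (X Y P T : {set bits n}) :
  beta ^+ #|Defs.fixset P| * #|T|%:R <= beta ^+ #|Defs.fixset X| * #|P|%:R ->
  (0 < #|T|)%N ->
  beta ^+ codim X Y * Nn ^+ 2 <= M * (#|T|%:R * #|Y|%:R) ->
  Inv P Y /\ beta ^+ codim P Y * #|T|%:R <= beta ^+ codim X Y * #|P|%:R.
Proof.
move=> ineq T0 keep.
have eP : beta ^+ codim P Y * #|T|%:R = beta ^+ #|Defs.fixset Y| * (beta ^+ #|Defs.fixset P| * #|T|%:R).
  by rewrite /codim exprD mulrAC mulrC.
have eX : beta ^+ codim X Y * #|P|%:R = beta ^+ #|Defs.fixset Y| * (beta ^+ #|Defs.fixset X| * #|P|%:R).
  by rewrite /codim exprD mulrAC mulrC.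
have bY : 0 <= beta ^+ #|Defs.fixset Y| by apply: exprn_ge0; exact: beta_ge0.
have key : beta ^+ codim P Y * #|T|%:R <= beta ^+ codim X Y * #|P|%:R.
  by rewrite eP eX; apply: ler_wpM2l.
split => //.
rewrite /Inv.
have Tr : 0 < (#|T|%:R : R) by rewrite ltr0n.
rewrite -(ler_pM2r Tr).
have N2 : 0 <= Nn ^+ 2 by rewrite exprn_ge0 // ltW // Nn_gt0.
apply: (@le_trans _ _ (beta ^+ codim X Y * #|P|%:R * Nn ^+ 2)).
  by rewrite mulrAC; apply: ler_wpM2r.
have P0 : 0 <= (#|P|%:R : R) by rewrite ler0n.
have := ler_wpM2r P0 keep.
move=> H; apply: le_trans (_ : _ <= M * (#|T|%:R * #|Y|%:R) * #|P|%:R) _.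
  by rewrite mulrAC.
set t := (#|T|%:R : R); set p := (#|P|%:R : R); set y := (#|Y|%:R : R); set mm := M.
by rewrite le_eqVlt; apply/orP; left; apply/eqP; ring.
Qed.

Lemma tailA k (IH : MainP k) (p : dproto n O) (hp : (ddepth p <= k)%N) (X Y : {set bits n})
  (hXY : subcube_like X Y gamma) (T : {set bits n}) : T \subset X ->
  exists cs : seq (gproto n O),
   [/\ allp (ChildA T Y k) cs, pairwise (fun c1 c2 => [disjoint rX c1 & rX c2]) cs,
       #|badl cs (deval p) T Y|%:R <= 2 * Bnd k (codim X Y) #|T|%:R #|Y|%:R
     & cs = [::] -> (#|T| * #|Y|)%:R <= 2 * Bnd k (codim X Y) #|T|%:R #|Y|%:R].
Proof.
have [m] := ubnP #|T|; elim: m T => // m IHm T Tm TX.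
set c := codim X Y.
case: (boolP (beta ^+ c * Nn ^+ 2 <= M * (#|T|%:R * #|Y|%:R))) => keep; last first.
  have hd : (#|T| * #|Y|)%:R <= 2 * Bnd k c #|T|%:R #|Y|%:R.
    have K1 : 1 <= K ^+ k by apply: exprn_ege1; exact: K_ge1.
    have b0 : 0 <= beta ^+ c by apply: exprn_ge0; exact: beta_ge0.
    have N0 : 0 <= Nn by exact: ltW Nn_gt0.
    rewrite natrM /Bnd; apply: (arith_disc K1 M_gt0 b0 N0 _ keep).
    by rewrite mulr_ge0 ?ler0n.
  exists [::]; split => //.
  apply: le_trans hd; rewrite ler_nat; exact: card_badl.
have T0 : T != set0.
  apply/negP => /eqP T0; move: keep; rewrite T0 cards0 mul0r mulr0 leNgt => /negP; apply.
  by rewrite mulr_gt0 ?exprn_gt0 ?Nn_gt0 ?beta_gt0.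
have Tpos : (0 < #|T|)%N by rewrite card_gt0.
have [P [PT P0 sP ineq]] := step TX T0.
have [I [J [sX sY]]] := hXY.
have [invP key] := @inv_child X Y P T ineq Tpos keep.
have sPY : subcube_like P Y gamma by exists (Defs.fixset P), J.
have [QP [[QX QY] wQ sQ [dQ cQ] bQ]] := IH p hp P Y sPY invP.
have Pcard : (0 < #|P|)%N by rewrite card_gt0.
have TPT : T :\: P \subset T by apply: subsetDl.
have cardTP : #|T :\: P| = (#|T| - #|P|)%N.
  by rewrite cardsD (setIidPr PT).
have [cs' [Fcs pwcs bcs _]] : exists cs' : seq (gproto n O),
   [/\ allp (ChildA (T :\: P) Y k) cs', pairwise (fun c1 c2 => [disjoint rX c1 & rX c2]) cs',
       #|badl cs' (deval p) (T :\: P) Y|%:R <= 2 * Bnd k c #|T :\: P|%:R #|Y|%:R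
     & cs' = [::] -> (#|T :\: P| * #|Y|)%:R <= 2 * Bnd k c #|T :\: P|%:R #|Y|%:R].
  apply: IHm; last exact: subset_trans TPT TX.
  rewrite cardTP; have h : (#|T| - #|P| < #|T|)%N by rewrite ltn_subrL Pcard Tpos.
  by apply: leq_trans h _; rewrite -ltnS.
exists (QP :: cs'); split => //.
- split; first by split => //; rewrite QX.
  by apply: allp_impl Fcs => c' [H1 H2 H3 H4 H5]; split => //; exact: subset_trans H2 TPT.
- rewrite /= pwcs andbT QX.
  apply: (all_disj (A := T :\: P)); first by apply: allp_impl Fcs => c' [].
  by rewrite disjoint_sym disjoints_subset setDE subsetIr.
- apply: le_trans (_ : (#|badp QP (deval p) P Y| + #|badl cs' (deval p) (T :\: P) Y|)%:R <= _).
    rewrite ler_nat; apply: leq_trans (card_setU_le _ _).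
    by apply: subset_leq_card; rewrite -QX; apply: badl_consA.
  rewrite natrD; apply: le_trans (lerD bQ bcs) _.
  rewrite cardTP natrB; last by apply: subset_leq_card.
  rewrite /Bnd; apply: arith1.
  + apply: mulr_ge0; first by apply: exprn_ge0; exact: K_ge0.
    by rewrite divr_ge0 ?sqrtr_ge0 // ltW // Nn_gt0.
  + by rewrite ltr0n.
  + by rewrite ler_nat subset_leq_card.
  + by rewrite ler0n.
  + by apply: exprn_ge0; exact: beta_ge0.
  + by apply: exprn_ge0; exact: beta_ge0.
  + exact: key.
Qed.

Lemma inv_childB (X Y P T : {set bits n}) :
  beta ^+ #|Defs.fixset P| * #|T|%:R <= beta ^+ #|Defs.fixset Y| * #|P|%:R ->
  (0 < #|T|)%N ->
  beta ^+ codim X Y * Nn ^+ 2 <= M * (#|X|%:R * #|T|%:R) ->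
  Inv X P /\ beta ^+ codim X P * #|T|%:R <= beta ^+ codim X Y * #|P|%:R.
Proof.
move=> ineq T0 keep.
have cXP : codim X P = codim P X by rewrite /codim addnC.
have cXY : codim X Y = codim Y X by rewrite /codim addnC.
have keep' : beta ^+ codim Y X * Nn ^+ 2 <= M * (#|T|%:R * #|X|%:R).
  by rewrite -cXY (mulrC (#|T|%:R)).
have [h1 h2] := @inv_child Y X P T ineq T0 keep'.
split; last by rewrite cXP cXY.
by rewrite /Inv cXP (mulrC (#|X|%:R)).
Qed.

Lemma tailB k (IH : MainP k) (p : dproto n O) (hp : (ddepth p <= k)%N) (X Y : {set bits n})
  (hXY : subcube_like X Y gamma) (T : {set bits n}) : T \subset Y ->
  exists cs : seq (gproto n O),
   [/\ allp (ChildB X T k) cs, pairwise (fun c1 c2 => [disjoint rY c1 & rY c2]) cs,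
       #|badl cs (deval p) X T|%:R <= 2 * Bnd k (codim X Y) #|X|%:R #|T|%:R
     & cs = [::] -> (#|X| * #|T|)%:R <= 2 * Bnd k (codim X Y) #|X|%:R #|T|%:R].
Proof.
have [m] := ubnP #|T|; elim: m T => // m IHm T Tm TY.
set c := codim X Y.
case: (boolP (beta ^+ c * Nn ^+ 2 <= M * (#|X|%:R * #|T|%:R))) => keep; last first.
  have hd : (#|X| * #|T|)%:R <= 2 * Bnd k c #|X|%:R #|T|%:R.
    have K1 : 1 <= K ^+ k by apply: exprn_ege1; exact: K_ge1.
    have b0 : 0 <= beta ^+ c by apply: exprn_ge0; exact: beta_ge0.
    have N0 : 0 <= Nn by exact: ltW Nn_gt0.
    rewrite natrM /Bnd; apply: (arith_disc K1 M_gt0 b0 N0 _ keep).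
    by rewrite mulr_ge0 ?ler0n.
  exists [::]; split => //.
  apply: le_trans hd; rewrite ler_nat; exact: card_badl.
have T0 : T != set0.
  apply/negP => /eqP T0; move: keep; rewrite T0 cards0 mulr0 mulr0 leNgt => /negP; apply.
  by rewrite mulr_gt0 ?exprn_gt0 ?Nn_gt0 ?beta_gt0.
have Tpos : (0 < #|T|)%N by rewrite card_gt0.
have [P [PT P0 sP ineq]] := step TY T0.
have [I [J [sX sY]]] := hXY.
have [invP key] := @inv_childB X Y P T ineq Tpos keep.
have sPY : subcube_like X P gamma by exists I, (Defs.fixset P).
have [QP [[QX QY] wQ sQ [dQ cQ] bQ]] := IH p hp X P sPY invP.
have Pcard : (0 < #|P|)%N by rewrite card_gt0.
have TPT : T :\: P \subset T by apply: subsetDl.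
have cardTP : #|T :\: P| = (#|T| - #|P|)%N.
  by rewrite cardsD (setIidPr PT).
have [cs' [Fcs pwcs bcs _]] : exists cs' : seq (gproto n O),
   [/\ allp (ChildB X (T :\: P) k) cs', pairwise (fun c1 c2 => [disjoint rY c1 & rY c2]) cs',
       #|badl cs' (deval p) X (T :\: P)|%:R <= 2 * Bnd k c #|X|%:R #|T :\: P|%:R
     & cs' = [::] -> (#|X| * #|T :\: P|)%:R <= 2 * Bnd k c #|X|%:R #|T :\: P|%:R].
  apply: IHm; last exact: subset_trans TPT TY.
  rewrite cardTP; have h : (#|T| - #|P| < #|T|)%N by rewrite ltn_subrL Pcard Tpos.
  by apply: leq_trans h _; rewrite -ltnS.
exists (QP :: cs'); split => //.
- split; first by split => //; rewrite QY.
  by apply: allp_impl Fcs => c' [H1 H2 H3 H4 H5]; split => //; exact: subset_trans H2 TPT.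
- rewrite /= pwcs andbT QY.
  apply: (all_disj (A := T :\: P)); first by apply: allp_impl Fcs => c' [].
  by rewrite disjoint_sym disjoints_subset setDE subsetIr.
- apply: le_trans (_ : (#|badp QP (deval p) X P| + #|badl cs' (deval p) X (T :\: P)|)%:R <= _).
    rewrite ler_nat; apply: leq_trans (card_setU_le _ _).
    by apply: subset_leq_card; rewrite -QY; apply: badl_consB.
  rewrite natrD; apply: le_trans (lerD bQ bcs) _.
  rewrite cardTP natrB; last by apply: subset_leq_card.
  rewrite /Bnd [#|X|%:R * #|P|%:R]mulrC [#|X|%:R * (_ - _)]mulrC [#|X|%:R * #|T|%:R]mulrC; apply: arith1.
  + apply: mulr_ge0; first by apply: exprn_ge0; exact: K_ge0.
    by rewrite divr_ge0 ?sqrtr_ge0 // ltW // Nn_gt0.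
  + by rewrite ltr0n.
  + by rewrite ler_nat subset_leq_card.
  + by rewrite ler0n.
  + by apply: exprn_ge0; exact: beta_ge0.
  + by apply: exprn_ge0; exact: beta_ge0.
  + exact: key.
Qed.

Lemma node_bound k c (a0 a1 b : R) : 0 <= a0 -> 0 <= a1 -> 0 <= b ->
  2 * Bnd k c a0 b + 2 * Bnd k c a1 b <= Bnd k.+1 c (a0 + a1) b.
Proof.
move=> h0 h1 hb.
have W0 : 0 <= Nn / Num.sqrt M by rewrite divr_ge0 ?sqrtr_ge0 // ltW // Nn_gt0.
have A0 : 0 <= K ^+ k * (Nn / Num.sqrt M) by rewrite mulr_ge0 // exprn_ge0 // K_ge0.
have := arith_node A0 (sqrtr_ge0 (beta ^+ c)) h0 h1 hb.
by rewrite /Bnd exprSr [K ^+ k * K * _]mulrAC.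
Qed.

Lemma Bnd_sym k c (a b : R) : Bnd k c a b = Bnd k c b a.
Proof. by rewrite /Bnd (mulrC a b). Qed.

Lemma x0bits : bits n. Proof. exact: [ffun => false]. Qed.

Lemma main k : MainP k.
Proof.
elim: k => [|k IHk] Pi.
  by case: Pi => [o|f p0 p1|g p0 p1] //= _ X Y hXY hI; apply: leaf_ok.
case: Pi => [o|f p0 p1|g p0 p1] hd X Y hXY hI; first exact: leaf_ok.
- move: hd; rewrite /= ltnS geq_max => /andP[h0 h1].
  pose F := [set x | f x].
  have [cs0 [F0 pw0 b0 e0]] := tailA IHk h0 hXY (subsetDl X F).
  have [cs1 [F1 pw1 b1 e1]] := tailA IHk h1 hXY (subsetIl X F).
  set c := codim X Y in b0 b1 e0 e1 *.
  have cX : (#|X :\: F| + #|X :&: F|)%N = #|X| by rewrite addnC cardsID.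
  have nb : 0 <= (#|Y|%:R : R) by rewrite ler0n.
  have nb0 : 0 <= (#|X :\: F|%:R : R) by rewrite ler0n.
  have nb1 : 0 <= (#|X :&: F|%:R : R) by rewrite ler0n.
  have NB := node_bound k c nb0 nb1 nb.
  rewrite -natrD cX in NB.
  case Ec: (cs0 ++ cs1) => [|c0 l0].
    have e0' : cs0 = [::] by move: Ec; case: (cs0).
    have e1' : cs1 = [::] by move: Ec; rewrite e0'.
    exists (GLeaf X Y (deval p0 x0bits x0bits)); split => //.
      by split => //; exact: codim_bound.
    apply: le_trans NB.
    apply: le_trans (_ : (#|X| * #|Y|)%:R <= _).
      by rewrite ler_nat card_badp.
    rewrite -cX mulnDl natrD; apply: lerD; [exact: e0|exact: e1].
  have ne : cs0 ++ cs1 <> [::] by rewrite Ec.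
  have G0 : allp (ChildA X Y k) cs0.
    by apply: allp_impl F0 => q [q1 q2 q3 q4 q5]; split => //; apply: subset_trans q2 (subsetDl X F).
  have G1 : allp (ChildA X Y k) cs1.
    by apply: allp_impl F1 => q [q1 q2 q3 q4 q5]; split => //; apply: subset_trans q2 (subsetIl X F).
  have G := allp_cat G0 G1.
  exists (GNode X Y true (cs0 ++ cs1)); split => //.
  + apply: gwf_nodeA => //.
      rewrite pairwise_cat pw0 pw1 andbT andbT.
      apply: (allrel_disj (A := X :\: F) (B := X :&: F)).
      * by apply: allp_impl F0 => q [].
      * by apply: allp_impl F1 => q [].
      * by rewrite disjoints_subset; apply/subsetP => x; rewrite !inE => /andP[/negbTE -> _]; rewrite andbF.
    by apply: allp_impl G => q [q1 q2 q3 q4 q5].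
  + rewrite /gsubcube_like; apply: gall_node => //.
    by apply: allp_impl G => q [].
  + split; first by apply: gdepth_node; apply: allp_impl G => q [_ _ _ _ []].
    rewrite /gcodim; apply: (gmax_node (Pm := fun m => m%:R <= CB)).
    * exact: CB_ge0.
    * exact: codim_bound.
    * by apply: allp_impl G => q [_ _ _ _ []].
  + apply: le_trans NB.
    apply: le_trans (_ : (#|badl cs0 (deval p0) (X :\: F) Y| + #|badl cs1 (deval p1) (X :&: F) Y|)%:R <= _).
      rewrite ler_nat; apply: leq_trans (card_setU_le _ _).
      apply: subset_leq_card; apply/subsetP => -[x y]; rewrite !inE geval_node /= => /and3P[xX yY].
      rewrite xX yY /= evl_cat.
      case fx: (f x).
        rewrite (evl_noneX (A := X :\: F)); first by move=> H; rewrite H ?orbT.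
          by apply: allp_impl F0 => q [].
        by rewrite !inE fx.
      rewrite (@evl_noneX _ _ cs1 (X :&: F)); last by rewrite !inE fx andbF.
        by case: (evl cs0 x y) => [o|] /= H; rewrite ?H.
      by apply: allp_impl F1 => q [].
    by rewrite natrD; apply: lerD.
- move: hd; rewrite /= ltnS geq_max => /andP[h0 h1].
  pose F := [set y | g y].
  have [cs0 [F0 pw0 b0 e0]] := tailB IHk h0 hXY (subsetDl Y F).
  have [cs1 [F1 pw1 b1 e1]] := tailB IHk h1 hXY (subsetIl Y F).
  set c := codim X Y in b0 b1 e0 e1 *.
  have cY : (#|Y :\: F| + #|Y :&: F|)%N = #|Y| by rewrite addnC cardsID.
  have nb : 0 <= (#|X|%:R : R) by rewrite ler0n.
  have nb0 : 0 <= (#|Y :\: F|%:R : R) by rewrite ler0n.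
  have nb1 : 0 <= (#|Y :&: F|%:R : R) by rewrite ler0n.
  have NB := node_bound k c nb0 nb1 nb.
  rewrite -natrD cY (Bnd_sym _ _ #|Y|%:R) (Bnd_sym _ _ (#|Y :\: F|%:R)) (Bnd_sym _ _ (#|Y :&: F|%:R)) in NB.
  case Ec: (cs0 ++ cs1) => [|c0 l0].
    have e0' : cs0 = [::] by move: Ec; case: (cs0).
    have e1' : cs1 = [::] by move: Ec; rewrite e0'.
    exists (GLeaf X Y (deval p0 x0bits x0bits)); split => //.
      by split => //; exact: codim_bound.
    apply: le_trans NB.
    apply: le_trans (_ : (#|X| * #|Y|)%:R <= _).
      by rewrite ler_nat card_badp.
    rewrite -cY mulnDr natrD; apply: lerD; [exact: e0|exact: e1].
  have ne : cs0 ++ cs1 <> [::] by rewrite Ec.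
  have G0 : allp (ChildB X Y k) cs0.
    by apply: allp_impl F0 => q [q1 q2 q3 q4 q5]; split => //; apply: subset_trans q2 (subsetDl Y F).
  have G1 : allp (ChildB X Y k) cs1.
    by apply: allp_impl F1 => q [q1 q2 q3 q4 q5]; split => //; apply: subset_trans q2 (subsetIl Y F).
  have G := allp_cat G0 G1.
  exists (GNode X Y false (cs0 ++ cs1)); split => //.
  + apply: gwf_nodeB => //.
      rewrite pairwise_cat pw0 pw1 andbT andbT.
      apply: (allrel_disj (A := Y :\: F) (B := Y :&: F)).
      * by apply: allp_impl F0 => q [].
      * by apply: allp_impl F1 => q [].
      * by rewrite disjoints_subset; apply/subsetP => x; rewrite !inE => /andP[/negbTE -> _]; rewrite andbF.
    by apply: allp_impl G => q [q1 q2 q3 q4 q5].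
  + rewrite /gsubcube_like; apply: gall_node => //.
    by apply: allp_impl G => q [].
  + split; first by apply: gdepth_node; apply: allp_impl G => q [_ _ _ _ []].
    rewrite /gcodim; apply: (gmax_node (Pm := fun m => m%:R <= CB)).
    * exact: CB_ge0.
    * exact: codim_bound.
    * by apply: allp_impl G => q [_ _ _ _ []].
  + apply: le_trans NB.
    apply: le_trans (_ : (#|badl cs0 (deval p0) X (Y :\: F)| + #|badl cs1 (deval p1) X (Y :&: F)|)%:R <= _).
      rewrite ler_nat; apply: leq_trans (card_setU_le _ _).
      apply: subset_leq_card; apply/subsetP => -[x y]; rewrite !inE geval_node /= => /and3P[xX yY].
      rewrite xX yY /= evl_cat.
      case gy: (g y).
        rewrite (evl_noneY (A := Y :\: F)); first by move=> H; rewrite H ?orbT.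
          by apply: allp_impl F0 => q [].
        by rewrite !inE gy.
      rewrite (@evl_noneY _ _ cs1 (Y :&: F)); last by rewrite !inE gy andbF.
        by case: (evl cs0 x y) => [o|] /= H; rewrite ?H.
      by apply: allp_impl F1 => q [].
    by rewrite natrD; apply: lerD.
Qed.
End Main.
Lemma e_le4 (R : realType) : expR (1:R) <= 4.
Proof.
have h := expR_ge1Dx (- (2^-1) : R).
have e : expR (1:R) = expR (2^-1) ^+ 2.
  by rewrite -expRM_natl mulfV // pnatr_eq0.
have uv : expR (2^-1 : R) * expR (- (2^-1)) = 1 by rewrite -expRD subrr expR0.
have u0 : 0 < expR (2^-1 : R) := expR_gt0 _.
rewrite e.
set u := expR (2^-1 : R) in uv u0 *; set v := expR (- (2^-1) : R) in h uv.
have u2 : u <= 2 by nra.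
nra.
Qed.

Lemma final_num (R : realType) d :
  Num.sqrt (8:R) ^+ d / Num.sqrt (2 ^+ (7 * d)) <= expR (- d%:R).
Proof.
have L0 : 0 <= Num.sqrt (8:R) ^+ d / Num.sqrt (2 ^+ (7 * d)).
  by rewrite divr_ge0 ?exprn_ge0 ?sqrtr_ge0.
rewrite -(@ler_pXn2r _ 2) // ?nnegrE ?expR_ge0 //.
rewrite expr_div_n -exprM mulnC exprM sqr_sqrtr ?ler0n // sqr_sqrtr ?exprn_ge0 ?ler0n //.
rewrite exprM -expr_div_n.
have -> : - (d%:R : R) = d%:R * -1 by rewrite mulrN1.
rewrite expRM_natl -exprM mulnC exprM.
apply: lerXn2r; rewrite ?nnegrE ?divr_ge0 ?exprn_ge0 ?ler0n ?expR_ge0 //.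
have -> : (8 : R) / 2 ^+ 7 = 16^-1.
  by field.
rewrite expRN exprVn lef_pV2 ?posrE ?exprn_gt0 ?expR_gt0 //.
have := e_le4 R; have := expR_ge0 (1:R); nra.
Qed.

Theorem mainTheorem4 (R : realType) (gamma : R) (n d : nat) (O : eqType)
    (Pi : dproto n O) :
  0 < gamma < 1 ->
  ddepth Pi = d ->
  exists Q : gproto n O,
    [/\ gwf Q,
        gsubcube_like gamma Q,
        (gdepth Q <= d)%N,
        (gcodim Q)%:R <= 7 / (1 - gamma) * d%:R
      & disagree_prob R Pi Q <= expR (- d%:R)].
Proof.
move=> hg hd.
pose x0 : bits n := [ffun => false].
have cT : #|[set: bits n]| = (2 ^ n)%N by rewrite cardsT card_ffun card_bool card_ord.
have st : structured [set: bits n] set0 gamma.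
  split; first by apply/set0Pn; exists x0; rewrite inE.
  split; first by exists x0 => x _ i; rewrite inE.
  move=> S _ a _; rewrite /prob_restr.
  have E : [set x in [set: bits n] | [forall i in S, x i == a i]] =
           [set x : bits n | [forall i in S, x i == a i]] by apply/setP => x; rewrite !inE.
  have cr := card_restr S a.
  have r0 : (0 < #|[set x : bits n | [forall i in S, x i == a i]]|)%N.
    by apply/card_gt0P; exists a; rewrite inE; apply/forall_inP.
  rewrite E; apply: minent_of.
    by rewrite divr_gt0 // ltr0n // cT expn_gt0.
  rewrite cT -cr natrM natrX invfM mulrA mulfV ?mul1r ?pnatr_eq0 -?lt0n //.
  rewrite -exprVn; apply: lerXn2r; rewrite ?nnegrE ?invr_ge0 ?ler0n ?beta_ge0 //.
  exact: beta_ge_half.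
have sT : subcube_like [set: bits n] [set: bits n] gamma by exists set0, set0.
have hI : Inv gamma d [set: bits n] [set: bits n].
  rewrite /Inv cT /Nn /M.
  have N2 : 0 <= ((2 ^ n)%:R : R) ^+ 2 by rewrite exprn_ge0 ?ler0n.
  apply: (@le_trans _ _ (((2 ^ n)%:R : R) ^+ 2)).
    rewrite -[X in _ <= X]mul1r; apply: ler_wpM2r => //.
    by rewrite exprn_ile1 ?beta_ge0 ?beta_le1.
  rewrite -expr2 -[X in X <= _]mul1r; apply: ler_wpM2r => //.
  by rewrite exprn_ege1 // ler1n.
have hd' : (ddepth Pi <= d)%N by rewrite hd.
have [Q [[QX QY] wQ sQ [dQ cQ] bQ]] := @main R gamma hg n O d d Pi hd' _ _ sT hI.
exists Q; split => //.
rewrite /disagree_prob.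
have Eset : [set xy : bits n * bits n | geval Q xy.1 xy.2 != Some (deval Pi xy.1 xy.2)] =
            badp Q (deval Pi) [set: bits n] [set: bits n].
  by apply/setP => -[x y]; rewrite !inE.
rewrite Eset cardsT card_prod -cardsT cT natrM.
have N0 : 0 < ((2 ^ n)%:R : R) by rewrite ltr0n expn_gt0.
rewrite ler_pdivrMr ?mulr_gt0 //.
apply: le_trans bQ _; rewrite cT /Bnd /Nn /M /K.
set N := ((2 ^ n)%:R : R).
have sN : Num.sqrt (N * N) = N by rewrite -expr2 sqrtr_sqr ger0_norm // ltW.
have sb : Num.sqrt (beta gamma ^+ codim [set: bits n] [set: bits n]) <= 1.
  by rewrite -sqrtr1 ler_sqrt // exprn_ile1 ?beta_ge0 ?beta_le1.
have fn := final_num R d.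
rewrite sN.
set L := Num.sqrt 8 ^+ d; set sM := Num.sqrt (2 ^+ (7 * d)) in fn *.
set sb' := Num.sqrt (beta gamma ^+ _) in sb *.
have L0 : 0 <= L / sM by rewrite divr_ge0 ?exprn_ge0 ?sqrtr_ge0.
have -> : L * (N / sM) * sb' * N = (L / sM) * sb' * (N * N) by ring.
apply: ler_wpM2r; first by apply: mulr_ge0; exact: ltW.
apply: le_trans fn; rewrite -[X in _ <= X]mulr1; apply: ler_wpM2l => //.
Qed.
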